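(* Let $G=\mathrm{Sl}(2,\mathbb R)$ acting on $\mathbb P^1$, let $W=\{(a,b)\in\mathbb R^2: a\ge0,\ |b|\le a\}$ and $S_W=\{g\in\mathrm{Sl}(2,\mathbb R): gW\subset W\}$. The core of the invariant control set of $S_W$ in $\mathbb P^1$ is $C_0=\{[(a,b)]:(a,b)\in\mathrm{int}W\}$. For $g\in\mathrm{Sl}(2,\mathbb R)$ and $0\ne z\in\mathbb R^2$ let $\rho(g,[z])=\|gz\|/\|z\|$ (Euclidean norm). Then: (i) $\|g(1,0)\|\ge 1/2$ for all $g\in S_W$; (ii) for every $z\in C_0$ there is $h\in S_W$ with $z=h[(1,0)]$ and $\rho(g,z)\ge 1/(2\|h\|)$ for all $g\in S_W$ (where $\|h\|$ is the operator norm), so $\inf_{g\in S_W}\rho(g,z)>0$; (iii) nevertheless $\inf\{\rho(g,z): g\in S_W,\ z\in C_0\}=0$, i.e. no lower bound uniform in $z\in C_0$ exists.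
   Context: Here $\rho(g,[z])=\|gz\|/\|z\|$ is the cocycle $\rho_\lambda$ for $\mathrm{Sl}(2,\mathbb R)$ associated with the functional $\lambda$ on the diagonal subalgebra satisfying $\lambda(\mathrm{diag}(1,-1))=1$. The invariant control set of $S_W$ is the unique maximal subset $D\subset\mathbb P^1$ with nonempty interior, $D\subset\mathrm{cl}(S_Wx)$ for all $x\in D$, and $S_WD\subset D$; its core is the set of its points fixed by some element of $\mathrm{int}S_W$. *)

(* Defs.v *)
From mathcomp Require Import all_boot all_order all_algebra.
From mathcomp Require Import all_classical all_reals.
Set Implicit Arguments. Unset Strict Implicit. Unset Printing Implicit Defensive.
Import Order.TTheory GRing.Theory Num.Theory.
Local Open Scope ring_scope.
Local Open Scope classical_set_scope.

Section Defs.
Variable R : realType.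

Definition cx (z : 'cV[R]_2) : R := z ord0 ord0.
Definition cy (z : 'cV[R]_2) : R := z ord_max ord0.

Definition vec2 (a b : R) : 'cV[R]_2 := \col_i (if i == ord0 then a else b).
Definition e1 : 'cV[R]_2 := vec2 1 0.

Definition enorm (z : 'cV[R]_2) : R := Num.sqrt (cx z ^+ 2 + cy z ^+ 2).

Definition opnorm (h : 'M[R]_2) : R :=
  sup [set enorm (h *m u) | u in [set u | enorm u = 1]].

Definition SL2 (g : 'M[R]_2) : Prop := \det g = 1.

Definition W (z : 'cV[R]_2) : Prop := 0 <= cx z /\ `|cy z| <= cx z.
Definition intW (z : 'cV[R]_2) : Prop := `|cy z| < cx z.

Definition S_W (g : 'M[R]_2) : Prop := SL2 g /\ forall z, W z -> W (g *m z).

(* points of P^1 are represented by nonzero vectors; [z] = [w] iff w = t z, t<>0 *)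
Definition projeq (z w : 'cV[R]_2) : Prop := exists t : R, t != 0 /\ w = t *: z.

Definition C0 (z : 'cV[R]_2) : Prop := z != 0 /\ exists w, intW w /\ projeq w z.

Definition rho (g : 'M[R]_2) (z : 'cV[R]_2) : R := enorm (g *m z) / enorm z.

End Defs.

(* Main.v *)
Require Import Defs.
From mathcomp Require Import all_boot all_order all_algebra.
From mathcomp Require Import all_classical all_reals.
From mathcomp Require Import ring lra.
Import Order.TTheory GRing.Theory Num.Theory.
Local Open Scope ring_scope.
Local Open Scope classical_set_scope.

Set Implicit Arguments. Unset Strict Implicit.
Section H.
Variable R : realType.

Lemma sum2 (F : 'I_2 -> R) : \sum_(i < 2) F i = F ord0 + F ord_max.
Proof.
rewrite big_ord_recr big_ord1 /=; congr (F _ + F _); exact/val_inj.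
Qed.

Lemma cx_mul (g : 'M[R]_2) z : cx (g *m z) = g ord0 ord0 * cx z + g ord0 ord_max * cy z.
Proof. by rewrite /cx /cy mxE sum2. Qed.
Lemma cy_mul (g : 'M[R]_2) z : cy (g *m z) = g ord_max ord0 * cx z + g ord_max ord_max * cy z.
Proof. by rewrite /cx /cy mxE sum2. Qed.

Lemma det2 (g : 'M[R]_2) : \det g = g ord0 ord0 * g ord_max ord_max - g ord0 ord_max * g ord_max ord0.
Proof.
rewrite (expand_det_row _ ord0) sum2 /cofactor !det_mx11 !mxE /=.
have -> : lift ord0 ord0 = ord_max :> 'I_2 by exact/val_inj.
have -> : lift ord_max ord0 = ord0 :> 'I_2 by exact/val_inj.
rewrite expr0 expr1 !mul1r mulN1r mulrN; congr (_ - _).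
Qed.

Lemma cx_scale (t : R) (z : 'cV[R]_2) : cx (t *: z) = t * cx z.
Proof. by rewrite /cx mxE. Qed.
Lemma cy_scale (t : R) (z : 'cV[R]_2) : cy (t *: z) = t * cy z.
Proof. by rewrite /cy mxE. Qed.
Lemma cx_vec2 (a b : R) : cx (vec2 a b) = a.
Proof. by rewrite /cx /vec2 mxE. Qed.
Lemma cy_vec2 (a b : R) : cy (vec2 a b) = b.
Proof. by rewrite /cy /vec2 mxE. Qed.

Lemma cV2_eq (u v : 'cV[R]_2) : cx u = cx v -> cy u = cy v -> u = v.
Proof.
move=> hx hy; apply/matrixP => i j.
rewrite (ord1 j).
case: i => [[|[|//]] Hi].
- by have -> : Ordinal Hi = ord0 by exact/val_inj.
- by have -> : Ordinal Hi = ord_max by exact/val_inj.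
Qed.

Lemma cV2_neq0 (z : 'cV[R]_2) : z != 0 -> cx z != 0 \/ cy z != 0.
Proof.
move=> nz; case: (boolP (cx z == 0)) => [/eqP hx|]; last by left.
case: (boolP (cy z == 0)) => [/eqP hy|]; last by right.
have z0 : z = 0.
  by apply: cV2_eq; [rewrite hx | rewrite hy]; rewrite /cx /cy mxE.
by rewrite z0 eqxx in nz.
Qed.

Lemma enorm_ge0 (z : 'cV[R]_2) : 0 <= enorm z.
Proof. exact: sqrtr_ge0. Qed.

Lemma enorm_cx (z : 'cV[R]_2) : `|cx z| <= enorm z.
Proof.
rewrite /enorm -sqrtr_sqr; apply: ler_wsqrtr.
by rewrite lerDl sqr_ge0.
Qed.
Lemma enorm_cy (z : 'cV[R]_2) : `|cy z| <= enorm z.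
Proof.
rewrite /enorm -sqrtr_sqr; apply: ler_wsqrtr.
by rewrite lerDr sqr_ge0.
Qed.

Lemma enorm_le (z : 'cV[R]_2) : enorm z <= `|cx z| + `|cy z|.
Proof.
rewrite /enorm -[X in _ <= X]ger0_norm ?addr_ge0 // -sqrtr_sqr; apply: ler_wsqrtr.
rewrite -(real_normK (num_real (cx z))) -(real_normK (num_real (cy z))).
have := normr_ge0 (cx z); have := normr_ge0 (cy z). nra.
Qed.

Lemma enorm_scale (t : R) (z : 'cV[R]_2) : enorm (t *: z) = `|t| * enorm z.
Proof.
rewrite /enorm cx_scale cy_scale !exprMn -mulrDr sqrtrM ?sqr_ge0 //.
by rewrite sqrtr_sqr.
Qed.

Lemma enorm_gt0 (z : 'cV[R]_2) : z != 0 -> 0 < enorm z.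
Proof.
move=> /cV2_neq0 [h|h].
- by apply: lt_le_trans (enorm_cx z); rewrite normr_gt0.
- by apply: lt_le_trans (enorm_cy z); rewrite normr_gt0.
Qed.

Definition mk2 (p q r s : R) : 'M[R]_2 :=
  \matrix_(i, j) if i == ord0 then (if j == ord0 then p else q)
                 else (if j == ord0 then r else s).

Lemma mk2E p q r s :
  [/\ mk2 p q r s ord0 ord0 = p, mk2 p q r s ord0 ord_max = q,
      mk2 p q r s ord_max ord0 = r & mk2 p q r s ord_max ord_max = s].
Proof. by rewrite /mk2 !mxE. Qed.

Lemma W_pres (g : 'M[R]_2) :
  `|g ord_max ord0 + g ord_max ord_max| <= g ord0 ord0 + g ord0 ord_max ->
  `|g ord_max ord0 - g ord_max ord_max| <= g ord0 ord0 - g ord0 ord_max ->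
  forall z, W z -> W (g *m z).
Proof.
move=> h1 h2 z [hz0 hz1]; rewrite /W cx_mul cy_mul.
move: h1 h2 hz1.
set p := g ord0 ord0; set q := g ord0 ord_max; set r := g ord_max ord0; set s := g ord_max ord_max.
set x := cx z; set y := cy z.
rewrite !ler_norml => /andP[h1 h1'] /andP[h2 h2'] /andP[h3 h3'].
have ha : 0 <= x + y by lra.
have hb : 0 <= x - y by lra.
have e1 : p * x + q * y = ((p + q) * (x + y) + (p - q) * (x - y)) / 2 by field.
have e2 : r * x + s * y = ((r + s) * (x + y) + (r - s) * (x - y)) / 2 by field.
rewrite e1 e2; split; first by nra.
idtac; apply/andP; split; nra.
Qed.

Lemma SW_nec (g : 'M[R]_2) : S_W g ->
  `|g ord_max ord0 + g ord_max ord_max| <= g ord0 ord0 + g ord0 ord_max /\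
  `|g ord_max ord0 - g ord_max ord_max| <= g ord0 ord0 - g ord0 ord_max.
Proof.
move=> [_ H].
have W1 : W (vec2 (1:R) 1) by rewrite /W cx_vec2 cy_vec2 normr1.
have W2 : W (vec2 (1:R) (-1)) by rewrite /W cx_vec2 cy_vec2 normrN normr1.
move: (H _ W1) (H _ W2); rewrite /W !cx_mul !cy_mul !cx_vec2 !cy_vec2.
rewrite !mulr1 !mulrN1 => [[_ ->] [_ ->]]; done.
Qed.

Lemma SW_p_ge1 (g : 'M[R]_2) : S_W g -> 1 <= g ord0 ord0.
Proof.
move=> Hg; have [h1 h2] := SW_nec Hg.
have := Hg.1; rewrite /SL2 det2.
move: h1 h2.
set p := g ord0 ord0; set q := g ord0 ord_max; set r := g ord_max ord0; set s := g ord_max ord_max.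
rewrite !ler_norml => /andP[h1 h1'] /andP[h2 h2'] hd.
have ha : 0 <= p + q by lra.
have hb : 0 <= p - q by lra.
have hprod : 1 <= (p + q) * (p - q).
  have : (p + q) * (r - s) - (p - q) * (r + s) = -2 by rewrite -hd; ring.
  nra.
nra.
Qed.

Lemma SW_e1 (g : 'M[R]_2) : S_W g -> 1 <= enorm (g *m e1 R).
Proof.
move=> Hg; apply: le_trans (enorm_cx _).
rewrite cx_mul /e1 cx_vec2 cy_vec2 mulr1 mulr0 addr0.
have := SW_p_ge1 Hg => h; rewrite ger0_norm //; lra.
Qed.

Lemma SW_mul (g h : 'M[R]_2) : S_W g -> S_W h -> S_W (g *m h).
Proof.
move=> [dg Hg] [dh Hh]; split; first by rewrite /SL2 det_mulmx dg dh mulr1.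
by move=> z Wz; rewrite -mulmxA; apply/Hg/Hh.
Qed.

Lemma SW_1 : S_W (1%:M : 'M[R]_2).
Proof. by split; [rewrite /SL2 det1 | move=> z; rewrite mul1mx]. Qed.


Lemma enorm_e1 : enorm (e1 R) = 1.
Proof. by rewrite /enorm /e1 cx_vec2 cy_vec2 expr1n expr0n addr0 sqrtr1. Qed.

Lemma opnorm_ge (h : 'M[R]_2) : enorm (h *m e1 R) <= opnorm h.
Proof.
rewrite /opnorm; apply: sup_upper_bound; last by exists (e1 R) => //; exact: enorm_e1.
split; first by exists (enorm (h *m e1 R)); exists (e1 R) => //; exact: enorm_e1.
exists (`|h ord0 ord0| + `|h ord0 ord_max| + (`|h ord_max ord0| + `|h ord_max ord_max|)).
move=> x [u /= hu <-].
apply: le_trans (enorm_le _) _.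
have hx : `|cx u| <= 1 by rewrite -hu enorm_cx.
have hy : `|cy u| <= 1 by rewrite -hu enorm_cy.
have hx0 := normr_ge0 (cx u); have hy0 := normr_ge0 (cy u).
have a0 := normr_ge0 (h ord0 ord0); have a1 := normr_ge0 (h ord0 ord_max).
have a2 := normr_ge0 (h ord_max ord0); have a3 := normr_ge0 (h ord_max ord_max).
apply: lerD; rewrite ?cx_mul ?cy_mul; apply: le_trans (ler_normD _ _) _; rewrite !normrM; apply: lerD; nra.
Qed.

Lemma rho_lb (h g : 'M[R]_2) (c : R) : S_W h -> c != 0 -> S_W g ->
  1 / enorm (h *m e1 R) <= rho g (c *: (h *m e1 R)).
Proof.
move=> Hh c0 Hg; rewrite /rho -scalemxAr !enorm_scale.
have N1 := SW_e1 Hh.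
have E1 : 1 <= enorm (g *m (h *m e1 R)) by rewrite mulmxA; apply: SW_e1; apply: SW_mul.
have cp : 0 < `|c| by rewrite normr_gt0.
have Np : 0 < enorm (h *m e1 R) by lra.
have -> : `|c| * enorm (g *m (h *m e1 R)) / (`|c| * enorm (h *m e1 R)) =
   enorm (g *m (h *m e1 R)) / enorm (h *m e1 R).
  by field; apply/andP; split; rewrite gt_eqF.
by rewrite ler_wpM2r // invr_ge0 ltW.
Qed.

Lemma C0_rep (z : 'cV[R]_2) : C0 z -> exists h, S_W h /\ exists c : R, c != 0 /\ z = c *: (h *m e1 R).
Proof.
move=> [nz [w [hw [t [t0 ->]]]]].
move: hw; rewrite /intW => hw.
set a := cx w in hw *; set b := cy w in hw *.
have ab : 0 < a ^+ 2 - b ^+ 2.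
  move: hw; rewrite ltr_norml => /andP[h1 h2]; nra.
set s := Num.sqrt (a ^+ 2 - b ^+ 2).
have sp : 0 < s by rewrite sqrtr_gt0.
have s2 : s ^+ 2 = a ^+ 2 - b ^+ 2 by rewrite sqr_sqrtr // ltW.
exists (mk2 (a / s) (b / s) (b / s) (a / s)).
have [E00 E01 E10 E11] := mk2E (a / s) (b / s) (b / s) (a / s).
have huv : `|b / s| < a / s.
  have si : 0 < s^-1 by rewrite invr_gt0.
  by rewrite normrM (gtr0_norm si) ltr_pM2r.
move: huv; rewrite ltr_norml => /andP[hu1 hu2].
have sn : s != 0 by rewrite gt_eqF.
split.
  split.
    rewrite /SL2 det2 E00 E01 E10 E11.
    have -> : a / s * (a / s) - b / s * (b / s) = (a ^+ 2 - b ^+ 2) / s ^+ 2 by field.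
    by rewrite -s2 divff // expf_neq0.
  apply: W_pres; rewrite E00 E01 E10 E11 ler_norml; apply/andP; split; lra.
exists (t * s); split; first by rewrite mulf_neq0 // gt_eqF.
apply: cV2_eq; rewrite ?cx_scale ?cy_scale ?cx_mul ?cy_mul /e1 cx_vec2 cy_vec2 ?E00 ?E01 ?E10 ?E11 -/a -/b; field.
all: exact: sn.
Qed.

Lemma rho_ge0 (g : 'M[R]_2) z : 0 <= rho g z.
Proof. by rewrite /rho divr_ge0 // enorm_ge0. Qed.

Lemma small (e : R) : 0 < e -> exists g z, S_W g /\ C0 z /\ rho g z < e.
Proof.
move=> ep.
set Y := e / 4.
have Yp : 0 < Y by rewrite /Y divr_gt0.
have Yn : Y != 0 by rewrite gt_eqF.
set X := Y^-1.
have Xp : 0 < X by rewrite invr_gt0.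
set c := (X + Y) / 2; set d := (X - Y) / 2.
have cd1 : c + d = X by rewrite /c /d; field.
have cd2 : c - d = Y by rewrite /c /d; field.
exists (mk2 c d d c), (vec2 (1 + Y ^+ 2) (Y ^+ 2 - 1)).
have [E00 E01 E10 E11] := mk2E c d d c.
have hcx : cx (mk2 c d d c *m vec2 (1 + Y ^+ 2) (Y ^+ 2 - 1)) = 2 * Y.
  by rewrite cx_mul E00 E01 cx_vec2 cy_vec2 /c /d /X; field.
have hcy : cy (mk2 c d d c *m vec2 (1 + Y ^+ 2) (Y ^+ 2 - 1)) = 0.
  by rewrite cy_mul E10 E11 cx_vec2 cy_vec2 /c /d /X; field.
split.
  split.
    rewrite /SL2 det2 E00 E01 E10 E11.
    have -> : c * c - d * d = (c + d) * (c - d) by ring.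
    by rewrite cd1 cd2 /X mulVf.
  apply: W_pres; rewrite E00 E01 E10 E11 ler_norml; apply/andP; split; lra.
split.
  split.
    apply/eqP => hz.
    have := cx_vec2 (1 + Y ^+ 2) (Y ^+ 2 - 1); rewrite hz /cx mxE => h.
    have : 0 < 1 + Y ^+ 2 by rewrite ltr_pwDl // sqr_ge0.
    by rewrite -h ltxx.
  exists (vec2 (1 + Y ^+ 2) (Y ^+ 2 - 1)); split; last by exists 1; rewrite oner_neq0 scale1r.
  rewrite /intW cx_vec2 cy_vec2 ltr_norml; apply/andP; split; nra.
have N1 : 1 <= enorm (vec2 (1 + Y ^+ 2) (Y ^+ 2 - 1)).
  apply: le_trans (enorm_cx _); rewrite cx_vec2 ger0_norm; have := sqr_ge0 Y; lra.
rewrite /rho [enorm (mk2 _ _ _ _ *m _)]/enorm hcx hcy expr0n addr0 sqrtr_sqr ger0_norm; last by lra.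
set N := enorm _ in N1 *.
have Np : 0 < N by lra.
apply: (@le_lt_trans _ _ (2 * Y)); last by rewrite /Y; lra.
rewrite ler_pdivrMr //; nra.
Qed.
End H.

Theorem mainTheorem6 (R : realType) :
  (* (i) *)
  (forall g : 'M[R]_2, S_W g -> 1 / 2 <= enorm (g *m e1 R))
  /\
  (* (ii) *)
  (forall z : 'cV[R]_2, C0 z ->
     (exists h : 'M[R]_2,
        S_W h /\ projeq (h *m e1 R) z /\
        (forall g : 'M[R]_2, S_W g -> 1 / (2 * opnorm h) <= rho g z))
     /\ 0 < inf ([set rho g z | g in [set g | S_W g]] : set R))
  /\
  (* (iii) *)
  inf ([set rho g z | g in [set g | S_W g] & z in [set z | C0 z]] : set R) = 0.
Proof.
split; first by move=> g Hg; have := SW_e1 Hg; lra.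
split.
  move=> z Cz; have [h [Hh [c [c0 zc]]]] := C0_rep Cz.
  have N1 := SW_e1 Hh.
  have NO := opnorm_ge h.
  set N := enorm (h *m e1 R) in N1 NO *.
  have Np : 0 < N by lra.
  split.
    exists h; split => //; split; first by exists c.
    move=> g Hg; apply: le_trans (_ : 1 / N <= _); last by rewrite zc; exact: rho_lb.
    rewrite ler_pdivrMr; last by lra.
    rewrite mulrC mulrA mulr1 ler_pdivlMr //; lra.
  have iN : 0 < 1 / N by rewrite divr_gt0.
  apply: (lt_le_trans iN); apply: lb_le_inf.
    by exists (rho 1%:M z), 1%:M => //; exact: SW_1.
  by move=> x [g /= Hg <-]; rewrite zc; exact: rho_lb.
set S := [set rho g z | g in _ & z in _].
have S0 : lbound S 0 by move=> x [g _ [z _ <-]]; exact: rho_ge0.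
have Sne : S !=set0.
  have [g [z [Hg [Hz _]]]] := small (@ltr01 R).
  by exists (rho g z), g => //; exists z.
apply/eqP; rewrite eq_le; apply/andP; split; last exact: lb_le_inf.
rewrite leNgt; apply/negP => hpos.
have [g [z [Hg [Hz hlt]]]] := small hpos.
have hle : inf S <= rho g z.
  by apply: (ge_inf (ex_intro _ 0 S0)); exists g => //; exists z.
lra.
Qed.
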